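(* Let $V(\tilde\Lambda)$ be a finite-dimensional irreducible $gl(m|n+1)$-module with highest weight $\tilde\Lambda=\sum_{i=1}^m\tilde\Lambda_i\varepsilon_i+\sum_{\mu=1}^{n+1}\tilde\Lambda_\mu\delta_\mu$. Let $v_+\in V(\tilde\Lambda)$ be a (nonzero) $L$-maximal weight vector whose weight, restricted to the Cartan subalgebra of $gl(m|n)$, is $\Lambda=\sum_{i=1}^m\Lambda_i\varepsilon_i+\sum_{\mu=1}^n\Lambda_\mu\delta_\mu$. Then: (i) the components of $\Lambda$ satisfy the betweenness conditions $\tilde\Lambda_\mu\ge\Lambda_\mu\ge\tilde\Lambda_{\mu+1}$ for $1\le\mu\le n$, and $\tilde\Lambda_i\ge\Lambda_i\ge\tilde\Lambda_i-1$ for $1\le i\le m$; (ii) $v_+$ is the unique (up to scalar multiples) $L$-maximal weight vector in $V(\tilde\Lambda)$ of weight $\Lambda$.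
   Context: Work over $\mathbb{C}$. $gl(m|n+1)$ has homogeneous basis $E_{pq}$, $1\le p,q\le m+n+1$, with parity $(p)+(q)$ where $(p)=0$ for $p\le m$ and $(p)=1$ for $p>m$, and graded bracket $[E_{pq},E_{rs}]=\delta_{qr}E_{ps}-(-1)^{((p)+(q))((r)+(s))}\delta_{ps}E_{rq}$. Weights are written in the basis $\varepsilon_i$ ($1\le i\le m$), $\delta_\mu$: the coefficient of $\varepsilon_i$ is the eigenvalue of $E_{ii}$ and the coefficient of $\delta_\mu$ is the eigenvalue of $E_{m+\mu,m+\mu}$. $gl(m|n)$ is the subalgebra spanned by $E_{pq}$ with $p,q\le m+n$, and $L=gl(m|n)\oplus gl(1)$ where $gl(1)$ is spanned by $E_{m+n+1,m+n+1}$. An $L$-maximal weight vector is a weight vector annihilated by all $E_{pq}$ with $p<q\le m+n$. (All weight components of $V(\tilde\Lambda)$ differ from those of $\tilde\Lambda$ by integers, so the inequalities compare numbers differing by integers.) *)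

(* Defs.v *)
From mathcomp Require Import all_boot all_algebra complex.
From mathcomp Require Import Rstruct.
Set Implicit Arguments. Unset Strict Implicit. Unset Printing Implicit Defensive.
Import GRing.Theory Num.Theory.
Local Open Scope ring_scope.

Definition C : numClosedFieldType := complex Rdefinitions.R.

(* Indices: 0-based ordinals p : 'I_N stand for the 1-based index p+1.
   Parity (p) = 0 iff p+1 <= m, i.e. (p) = 1 iff m <= p (0-based). *)
Definition par (m N : nat) (p : 'I_N) : bool := (m <= p)%N.

Definition sgn (m N : nat) (p q r s : 'I_N) : C :=
  (-1) ^+ nat_of_bool ((par m p (+) par m q) && (par m r (+) par m s)).

(* A gl(m|N-m)-supermodule structure on C^d (column vectors):
   rho p q is the matrix of E_pq, J is the parity operator of the
   Z/2-grading (J^2 = 1, E_pq has parity (p)+(q)), and the graded bracket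
   [E_pq,E_rs] = d_qr E_ps - (-1)^{..} d_ps E_rq is represented. *)
Definition super_glrep (m N d : nat) (rho : 'I_N -> 'I_N -> 'M[C]_d)
    (J : 'M[C]_d) : Prop :=
  [/\ J *m J = 1%:M,
      (forall p q, J *m rho p q =
         ((-1) ^+ nat_of_bool (par m p (+) par m q)) *: (rho p q *m J)) &
      (forall p q r s,
         rho p q *m rho r s - sgn m p q r s *: (rho r s *m rho p q)
         = (q == r)%:R *: rho p s - (sgn m p q r s * (p == s)%:R) *: rho r q)].

(* Irreducibility (as a supermodule): C^d is nonzero and every graded
   submodule (a subspace stable under all E_pq and under J) is 0 or everything.
   Subspaces of column vectors are encoded as row spaces of matrices U,
   the subspace being {u^T | u in rowspace U}. *)
Definition irreducible_super (N d : nat) (rho : 'I_N -> 'I_N -> 'M[C]_d)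
    (J : 'M[C]_d) : Prop :=
  (0 < d)%N /\
  forall U : 'M[C]_d,
    (forall p q, (U *m (rho p q)^T <= U)%MS) -> (U *m J^T <= U)%MS ->
    U = 0 \/ row_full U.

Definition weight_vector (N d : nat) (rho : 'I_N -> 'I_N -> 'M[C]_d)
    (v : 'cV[C]_d) (w : 'I_N -> C) : Prop :=
  v != 0 /\ forall p, rho p p *m v = w p *: v.

Definition has_highest_weight (N d : nat) (rho : 'I_N -> 'I_N -> 'M[C]_d)
    (lam : 'I_N -> C) : Prop :=
  exists v : 'cV[C]_d, weight_vector rho v lam /\
    forall p q : 'I_N, (p < q)%N -> rho p q *m v = 0.

(* L-maximal: annihilated by all E_pq with p < q <= m+n (1-based),
   i.e. p < q < m+n (0-based). *)
Definition L_maximal (k N d : nat) (rho : 'I_N -> 'I_N -> 'M[C]_d)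
    (v : 'cV[C]_d) : Prop :=
  forall p q : 'I_N, (p < q)%N -> (q < k)%N -> rho p q *m v = 0.

(* Main.v *)
Require Import Defs.
From mathcomp Require Import all_boot all_algebra complex.
From mathcomp Require Import Rstruct.
From mathcomp Require Import zify ring.
Set Implicit Arguments. Unset Strict Implicit. Unset Printing Implicit Defensive.
Import GRing.Theory Num.Theory.
Local Open Scope ring_scope.

Section Thm.
Variables (m n d : nat).
Local Notation N := (m + n).+1.
Local Notation T := (m + n).
Variable rho : 'I_N -> 'I_N -> 'M[C]_d.
Variable J : 'M[C]_d.
Hypothesis Hrep : super_glrep m rho J.
Hypothesis Hirr : irreducible_super rho J.
Local Notation E := rho.
Definition tl : 'I_N := ord_max.

Lemma sgn_sq (p q r s : 'I_N) : sgn m p q r s * sgn m p q r s = 1.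
Proof. by rewrite /sgn; case: (_ && _); rewrite ?expr1 ?expr0 ?mulr1 // mulrNN mulr1. Qed.

Lemma sgn1l (p q r s : 'I_N) : par m p = par m q -> sgn m p q r s = 1.
Proof. by move=> h; rewrite /sgn h addbb. Qed.

Lemma sgn1r (p q r s : 'I_N) : par m r = par m s -> sgn m p q r s = 1.
Proof. by move=> h; rewrite /sgn h addbb andbF. Qed.

Lemma rel (p q r s : 'I_N) (x : 'cV[C]_d) : E p q *m (E r s *m x) =
  sgn m p q r s *: (E r s *m (E p q *m x)) + (q == r)%:R *: (E p s *m x)
  - (sgn m p q r s * (p == s)%:R) *: (E r q *m x).
Proof.
case: Hrep => _ _ H.
have := congr1 (mulmx^~ x) (H p q r s); rewrite /=.
rewrite !mulmxDl !mulNmx -!scalemxAl -!mulmxA => /eqP.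
by rewrite subr_eq => /eqP ->; rewrite addrC addrA.
Qed.

Lemma par_tl : par m tl.
Proof. by rewrite /par /= leq_addr. Qed.

Lemma Jcomm (p q : 'I_N) (x : 'cV[C]_d) : E p q *m (J *m x) =
   ((-1) ^+ nat_of_bool (par m p (+) par m q)) *: (J *m (E p q *m x)).
Proof.
case: Hrep => HJ HJE _.
set c := (-1) ^+ _.
have cc : c * c = 1 by rewrite /c; case: (_ (+) _); rewrite ?expr1 ?expr0 ?mulr1 // mulrNN mulr1.
have H1 : J *m (E p q *m x) = c *: (E p q *m (J *m x)).
  by rewrite -{1}[x]mul1mx -HJ !mulmxA (HJE p q) -!scalemxAl -!mulmxA (mulmxA J) HJ mul1mx.
by rewrite H1 scalerA cc scale1r.
Qed.

Definition wv (x : 'cV[C]_d) (nu : 'I_N -> C) := forall p, E p p *m x = nu p *: x.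

Lemma wvE (x : 'cV[C]_d) nu (p q : 'I_N) : wv x nu -> p != q ->
  wv (E p q *m x) (fun r => nu r + (r == p)%:R - (r == q)%:R).
Proof.
move=> Hx npq r; rewrite rel sgn1l // scale1r Hx -scalemxAr.
have [->|nrp] := eqVneq r p.
  by rewrite (negPf npq) mulr0 scale0r !subr0 scalerDl.
have [->|nrq] := eqVneq r q.
  by rewrite mul1r scale0r addr0 scale1r addr0 scalerBl scale1r.
by rewrite mulr0 !scale0r addr0 subr0 addr0 subr0.
Qed.

Definition app (B : 'M[C]_d) (z : 'cV[C]_d) : 'cV[C]_d := B *m z.

Lemma iter_kill (A B : 'M[C]_d) (c : C) (y : 'cV[C]_d) k :
  (forall z : 'cV[C]_d, A *m (B *m z) = c *: (B *m (A *m z))) -> A *m y = 0 ->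
  A *m iter k (app B) y = 0.
Proof. move=> HAB Hy; elim: k => //= k IH; by rewrite HAB IH mulmx0 scaler0. Qed.

Lemma iter_kill2 (A B : 'M[C]_d) (Cf : 'cV[C]_d -> 'cV[C]_d) (c : C) (y : 'cV[C]_d) k :
  (forall z : 'cV[C]_d, A *m (B *m z) = c *: (B *m (A *m z)) + Cf z) -> A *m y = 0 ->
  (forall j, Cf (iter j (app B) y) = 0) ->
  A *m iter k (app B) y = 0.
Proof. move=> HAB Hy HC; elim: k => //= k IH; by rewrite HAB IH HC mulmx0 scaler0 addr0. Qed.

Lemma wv_iter (x : 'cV[C]_d) nu (p q : 'I_N) k : wv x nu -> p != q ->
  wv (iter k (app (E p q)) x) (fun r => nu r + k%:R * ((r == p)%:R - (r == q)%:R)).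
Proof.
move=> Hx npq; elim: k => [|k IH] /=.
  by move=> r; rewrite mul0r addr0 Hx.
move=> r; rewrite (wvE IH npq r); congr (_ *: _).
by rewrite mulrSr mulrDl mul1r !addrA addrAC.
Qed.

Lemma nil_shift (G A : 'M[C]_d) (del lam : C) (y : 'cV[C]_d) :
  del != 0 ->
  (forall z : 'cV[C]_d, G *m (A *m z) = A *m (G *m z) + del *: (A *m z)) ->
  G *m y = lam *: y -> y != 0 ->
  exists k, iter k (app A) y != 0 /\ iter k.+1 (app A) y = 0.
Proof.
move=> ndel HGA Hy ny.
have Heig j : G *m iter j (app A) y = (lam + j%:R * del) *: iter j (app A) y.
  elim: j => [|j IH] /=; first by rewrite mul0r addr0.
  rewrite HGA IH -scalemxAr -scalerDl; congr (_ *: _).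
  by rewrite mulrSr mulrDl mul1r addrA.
have Hex : exists j, iter j (app A) y == 0.
  have: ~~ [forall j : 'I_d.+1, iter j (app A) y != 0].
    apply/negP => /forallP Hall.
    set rs := [seq lam + j%:R * del | j <- iota 0 d.+1].
    have: (size rs < size (char_poly G^T))%N.
      apply: max_poly_roots.
      - exact: monic_neq0 (char_poly_monic _).
      - apply/allP => z /mapP [j]; rewrite mem_iota add0n => /andP [_ ltj] ->.
        rewrite -eigenvalue_root_char /eigenvalue.
        apply/negP => /eqP H0.
        have := Hall (Ordinal ltj) => /= /negP; apply.
        rewrite -trmx_eq0 -submx0 -H0; apply/eigenspaceP.
        by rewrite -trmx_mul Heig linearZ.
      - rewrite map_inj_uniq ?iota_uniq // => i j /addrI /mulIf.
        by move=> /(_ ndel) /eqP; rewrite eqr_nat => /eqP.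
    by rewrite size_map size_iota size_char_poly ltnn.
  rewrite negb_forall => /existsP [j]; rewrite negbK => Hj; by exists j.
case: (ex_minnP Hex) => i Hi Hmin.
case: i Hi Hmin => [|k] Hi Hmin; first by rewrite /= (negPf ny) in Hi.
exists k; split; last exact/eqP.
apply/negP => Hk; have := Hmin _ Hk; by rewrite ltnn.
Qed.

Lemma relM (p q r s : 'I_N) : E p q *m E r s =
  sgn m p q r s *: (E r s *m E p q) + (q == r)%:R *: E p s
  - (sgn m p q r s * (p == s)%:R) *: E r q.
Proof.
case: Hrep => _ _ H; have := H p q r s; move/eqP.
by rewrite subr_eq => /eqP ->; rewrite addrC addrA.
Qed.

Definition Dop : 'M[C]_d := \sum_(r : 'I_N) (r : nat)%:R *: E r r.
Definition sgm (nu : 'I_N -> C) : C := \sum_(r : 'I_N) (r : nat)%:R * nu r.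

Lemma D_wv x nu : wv x nu -> Dop *m x = sgm nu *: x.
Proof.
move=> Hx; rewrite /Dop mulmx_suml /sgm scaler_suml; apply: eq_bigr => r _.
by rewrite -scalemxAl Hx scalerA.
Qed.

Lemma sum_delta (i : 'I_N) (c : C) : \sum_(r : 'I_N) (r == i)%:R * c = c.
Proof.
rewrite (bigD1 i) //= eqxx mul1r big1 ?addr0 // => r /negPf ->; by rewrite mul0r.
Qed.

Lemma D_comm (p q : 'I_N) : p != q ->
  Dop *m E p q = E p q *m Dop + ((p : nat)%:R - (q : nat)%:R) *: E p q.
Proof.
move=> npq; rewrite /Dop mulmx_suml mulmx_sumr.
have -> : \sum_(r : 'I_N) (r : nat)%:R *: E r r *m E p q =
  \sum_(r : 'I_N) (E p q *m ((r : nat)%:R *: E r r) +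
     ((r == p)%:R * (p : nat)%:R - (r == q)%:R * (q : nat)%:R) *: E p q).
  apply: eq_bigr => r _; rewrite -scalemxAl relM sgn1l // scale1r -scalemxAr.
  have [->|nrp] := eqVneq r p.
    rewrite (negPf npq) /= !(mul1r, mul0r, mulr0, scale0r, subr0, scale1r).
    by rewrite scalerDr.
  have [->|nrq] := eqVneq r q.
    rewrite /= !(mul1r, mul0r, mulr0, mulr1, scale0r, subr0, sub0r, scale1r, addr0, add0r).
    by rewrite scalerBr scaleNr.
  by rewrite /= !(mul1r, mul0r, mulr0, scale0r, subr0, addr0).
rewrite big_split /= -scaler_suml; congr (_ + _ *: _).
by rewrite sumrB !sum_delta.
Qed.

Definition G := Dop^T.
Definition eig c := eigenspace G c.

Lemma eigF (p q : 'I_N) c k (U : 'M[C]_(k, d)) : p != q -> (U <= eig c)%MS ->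
  (U *m (E p q)^T <= eig (c + ((p : nat)%:R - (q : nat)%:R)))%MS.
Proof.
move=> npq /eigenspaceP; rewrite /G => HU; apply/eigenspaceP.
rewrite -mulmxA /G -trmx_mul D_comm // linearD linearZ /= trmx_mul mulmxDr.
rewrite mulmxA HU -scalemxAl -scalemxAr. by rewrite -scalerDl.
Qed.

Definition low (pq : 'I_N * 'I_N) : bool := (pq.2 < pq.1)%N.
Definition stepW (U : 'M[C]_d) : 'M[C]_d :=
  (U + \sum_(pq | low pq) U *m (E pq.1 pq.2)^T)%MS.
Fixpoint Wk (h : 'cV[C]_d) (k : nat) : 'M[C]_d :=
  if k is k'.+1 then stepW (Wk h k') else <<h^T>>%MS.

Lemma Wk_mono h k : (Wk h k <= Wk h k.+1)%MS.
Proof. by rewrite /= /stepW addsmxSl. Qed.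

Lemma Wk_monoK h i j : (i <= j)%N -> (Wk h i <= Wk h j)%MS.
Proof.
move=> /subnK <-; elim: (j - i)%N => [|k IH]; first by rewrite add0n.
by rewrite addSn; apply: submx_trans IH (Wk_mono _ _).
Qed.

Lemma Wk_low h k (p q : 'I_N) : (q < p)%N -> (Wk h k *m (E p q)^T <= Wk h k.+1)%MS.
Proof.
move=> qp; rewrite /= /stepW; apply: submx_trans (addsmxSr _ _).
by apply: (sumsmx_sup (p, q)).
Qed.

Definition RK (x : 'cV[C]_d) := forall p q : 'I_N, (p < q)%N -> E p q *m x = 0.

Lemma Wk_all h nu k (p q : 'I_N) : wv h nu -> RK h ->
  (Wk h k *m (E p q)^T <= Wk h k.+1)%MS.
Proof.
move=> Hh Rh; elim: k p q => [|k IH] p q.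
  have Hg : (<<h^T>> <= h^T)%MS by rewrite genmxE.
  apply: submx_trans (submxMr _ Hg) _.
  rewrite -trmx_mul.
  case: (ltngtP p q) => [pq|qp|pq].
  - by rewrite Rh // trmx0 sub0mx.
  - apply: submx_trans (Wk_low h 0 qp).
    by rewrite trmx_mul; apply: submxMr; rewrite genmxE.
  - have -> : p = q by apply: val_inj.
    rewrite Hh linearZ /= scalemx_sub //.
    by apply: submx_trans (Wk_mono h 0); rewrite /= genmxE.
rewrite [Wk h k.+1]/= /stepW addsmxMr addsmx_sub; apply/andP; split.
  exact: submx_trans (IH p q) (Wk_mono _ _).
rewrite sumsmxMr; apply/sumsmx_subP => [[r s]] /= sr.
rewrite -mulmxA -trmx_mul relM !linearD linearN !linearZ /= trmx_mul.
rewrite mulmxN scalerN -scaleNr !addmx_sub ?scalemx_sub //.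
- rewrite mulmxA; apply: submx_trans (Wk_low h k.+1 sr).
  by apply: submxMr; exact: IH.
- exact: submx_trans (IH _ _) (Wk_mono _ _).
- exact: submx_trans (IH _ _) (Wk_mono _ _).
Qed.

Lemma Wk_J h c k : J *m h = c *: h -> (Wk h k *m J^T <= Wk h k)%MS.
Proof.
move=> Hh; elim: k => [|k IH].
  have Hg : (<<h^T>> <= h^T)%MS by rewrite genmxE.
  apply: submx_trans (submxMr _ Hg) _.
  by rewrite -trmx_mul Hh linearZ /= scalemx_sub // genmxE.
rewrite [Wk h k.+1]/= /stepW addsmxMr addsmx_sub; apply/andP; split.
  exact: submx_trans IH (addsmxSl _ _).
rewrite sumsmxMr; apply/sumsmx_subP => [[r s]] /= sr.
case: Hrep => _ HJE _.
rewrite -mulmxA -trmx_mul HJE linearZ /= trmx_mul -scalemxAr scalemx_sub //.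
rewrite mulmxA; apply: submx_trans (submxMr _ IH) _.
exact: (Wk_low h k sr).
Qed.

Lemma Wk_stab h : exists k, (Wk h k.+1 <= Wk h k)%MS.
Proof.
case: (boolP [exists k : 'I_d.+1, (Wk h k.+1 <= Wk h k)%MS]) => [/existsP [k Hk]|].
  by exists k.
rewrite negb_exists => /forallP Hall.
have Hr : forall k, (k <= d.+1)%N -> (k <= \rank (Wk h k))%N.
  elim => [|k IH] Hk //.
  have := Hall (Ordinal Hk) => /= HN.
  have Hlt : (Wk h k < Wk h k.+1)%MS by rewrite ltmxE Wk_mono HN.
  exact: leq_ltn_trans (IH (ltnW Hk)) (rank_ltmx Hlt).
have := Hr d.+1 (leqnn _); by rewrite leqNgt ltnS rank_leq_col.
Qed.

Lemma Wk_full h nu c : h != 0 -> wv h nu -> RK h -> J *m h = c *: h ->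
  exists K, forall x : 'cV[C]_d, (x^T <= Wk h K)%MS.
Proof.
move=> nh Hh Rh Jh; case: (Wk_stab h) => K HK; exists K.
case: Hirr => _ Hirr'; case: (Hirr' (Wk h K)).
- by move=> p q; exact: submx_trans (Wk_all K p q Hh Rh) HK.
- exact: Wk_J Jh.
- move=> H0; exfalso.
  have : (h^T <= Wk h K)%MS.
    by apply: submx_trans (Wk_monoK h (leq0n K)); rewrite /= genmxE.
  by rewrite H0 submx0 trmx_eq0 (negPf nh).
- by move=> Hf x; exact: submx_full.
Qed.

Fixpoint Yk (h : 'cV[C]_d) (k : nat) : 'M[C]_d :=
  if k is k'.+1 then
    (Yk h k' + \sum_(pq | low pq) ((<<h^T>> + Yk h k')%MS *m (E pq.1 pq.2)^T))%MS
  else 0.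

Lemma Wk_Yk h k : (Wk h k <= <<h^T>> + Yk h k)%MS.
Proof.
elim: k => [|k IH] /=; first exact: addsmxSl.
rewrite /stepW addsmx_sub; apply/andP; split.
  by apply: submx_trans IH _; apply: addsmxS => //; exact: addsmxSl.
apply: submx_trans (addsmxSr _ _); apply: submx_trans (addsmxSr _ _).
apply/sumsmx_subP => pq Hpq; apply: (sumsmx_sup pq) => //.
exact: submxMr.
Qed.

Definition Ysum (s : C) (M : nat) : 'M[C]_d := (\sum_(j < M) eig (s + (j.+1)%:R))%MS.

Lemma eig_Ysum s M j : (j < M)%N -> (eig (s + (j.+1)%:R) <= Ysum s M)%MS.
Proof. by move=> jM; apply: (sumsmx_sup (Ordinal jM)). Qed.

Lemma Ysum_mono s M M' : (M <= M')%N -> (Ysum s M <= Ysum s M')%MS.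
Proof.
move=> MM; apply/sumsmx_subP => j _; apply: eig_Ysum.
exact: leq_trans (ltn_ord j) MM.
Qed.

Lemma Ysum_shift s M (p q : 'I_N) : (q < p)%N ->
  (Ysum s M *m (E p q)^T <= Ysum s (M + T))%MS.
Proof.
move=> qp; rewrite sumsmxMr; apply/sumsmx_subP => j _.
have npq : p != q by rewrite neq_ltn qp orbT.
apply: submx_trans (eigF npq (submx_refl _)) _.
rewrite -natrB ?(ltnW qp) // -addrA -natrD.
rewrite (_ : (j.+1 + (p - q))%N = (j + (p - q)).+1); last by rewrite addSn.
apply: eig_Ysum; have := ltn_ord j; have := ltn_ord p; lia.
Qed.

Lemma Yk_Ysum h nu k : wv h nu -> (Yk h k <= Ysum (sgm nu) (k * T))%MS.
Proof.
move=> Hh; elim: k => [|k IH] /=; first exact: sub0mx.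
rewrite addsmx_sub; apply/andP; split.
  by apply: submx_trans IH (Ysum_mono _ _); rewrite leq_mul2r leqnSn orbT.
apply/sumsmx_subP => [[p q]]; rewrite /low /= => qp.
have npq : p != q by rewrite neq_ltn qp orbT.
rewrite addsmxMr addsmx_sub; apply/andP; split.
  have Hg : (<<h^T>> <= h^T)%MS by rewrite genmxE.
  apply: submx_trans (submxMr _ Hg) _.
  have Hh' : (h^T <= eig (sgm nu))%MS.
    by apply/eigenspaceP; rewrite /G -trmx_mul (D_wv Hh) linearZ.
  apply: submx_trans (eigF npq Hh') _.
  rewrite -natrB ?(ltnW qp) //.
  have -> : (p - q = (p - q).-1.+1)%N by rewrite prednK // subn_gt0.
  apply: eig_Ysum; have := ltn_ord p; nia.
apply: submx_trans (submxMr _ IH) _.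
apply: submx_trans (Ysum_shift _ _ qp) _.
by apply: Ysum_mono; rewrite mulSn addnC.
Qed.

Definition Pm (s : C) (M : nat) : 'M[C]_d := \prod_(j < M) (G - (s + (j.+1)%:R)%:M).

Lemma commG a b : GRing.comm (G - a%:M) (G - b%:M).
Proof.
have cGs c : GRing.comm G c%:M by rewrite /GRing.comm -!mulmxE scalar_mxC.
have css c c' : GRing.comm (c%:M : 'M[C]_d) c'%:M by rewrite /GRing.comm -!mulmxE scalar_mxC.
apply: commrB.
- apply: commr_sym; apply: commrB; [exact: commr_refl | exact: cGs].
- apply: commr_sym; apply: commrB; [exact: commr_sym (cGs _) | exact: css].
Qed.

Lemma Pm_comm s M a : GRing.comm (G - a%:M) (Pm s M).
Proof. by apply: commr_prod => j _; apply: commG. Qed.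

Lemma Pm_eig s M lam k (W : 'M[C]_(k, d)) : W *m G = lam *: W ->
  W *m Pm s M = (\prod_(j < M) (lam - (s + (j.+1)%:R))) *: W.
Proof.
move=> HW; elim: M => [|M IH]; first by rewrite /Pm !big_ord0 mulmx1 scale1r.
rewrite /Pm !big_ord_recr /= -mulmxE mulmxA.
rewrite /Pm in IH; rewrite IH -scalemxAl mulmxBr HW mul_mx_scalar -scalerBl.
by rewrite scalerA.
Qed.

Lemma Pm_annih s M k (W : 'M[C]_(k, d)) : (W <= Ysum s M)%MS -> W *m Pm s M = 0.
Proof.
elim: M k W => [|M IH] k W.
  by rewrite /Ysum big_ord0 submx0 => /eqP ->; rewrite mul0mx.
rewrite /Ysum big_ord_recr /= => /sub_addsmxP [[u1 u2]] /= ->.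
rewrite /Pm big_ord_recr /= mulmxDl.
have H1 := IH _ _ (submx_refl (Ysum s M)); rewrite /Pm /Ysum in H1.
set P := \prod_(i < M) _ in H1 *; set L := (G - _%:M).
set A := (\sum_(i < M) _)%MS in H1 *.
set B := eig _.
have HC : P * L = L * P by have := Pm_comm s M (s + (M.+1)%:R); rewrite /GRing.comm.
have HB : B *m L = 0.
  have : B *m G = (s + (M.+1)%:R) *: B by apply/eigenspaceP.
  by rewrite /L mulmxBr mul_mx_scalar => ->; rewrite subrr.
have E1 : P * L = P *m L by rewrite mulmxE.
have E2 : L * P = L *m P by rewrite mulmxE.
have T1 : u1 *m A *m (P *m L) = 0.
  by rewrite (mulmxA (u1 *m A)) -(mulmxA u1) H1 mulmx0 mul0mx.
have T2 : u2 *m B *m (L *m P) = 0.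
  by rewrite (mulmxA (u2 *m B)) -(mulmxA u2) HB mulmx0 mul0mx.
by rewrite {1}E1 HC E2 T1 T2 addr0.
Qed.

Lemma hw_decomp (h : 'cV[C]_d) nu c : h != 0 -> wv h nu -> RK h -> J *m h = c *: h ->
  exists M, forall x : 'cV[C]_d, exists (a : C) (y : 'rV[C]_d),
    x^T = a *: h^T + y /\ (y <= Ysum (sgm nu) M)%MS.
Proof.
move=> nh Hh Rh Jh; case: (Wk_full nh Hh Rh Jh) => K HK; exists (K * T) => x.
have : (x^T <= <<h^T>> + Ysum (sgm nu) (K * T))%MS.
  apply: submx_trans (HK x) _; apply: submx_trans (Wk_Yk h K) _.
  by apply: addsmxS => //; exact: Yk_Ysum.
case/sub_addsmxP => [[u1 u2]] /= ->.
have : (u1 *m <<h^T>> <= h^T)%MS by rewrite -(genmxE (h^T)) submxMl.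
case/sub_rVP => a Ha; exists a, (u2 *m Ysum (sgm nu) (K * T)).
by split; [rewrite Ha | exact: submxMl].
Qed.

Lemma EIG (h x : 'cV[C]_d) nu c lam : h != 0 -> wv h nu -> RK h -> J *m h = c *: h ->
  x != 0 -> Dop *m x = lam *: x -> exists j : nat, lam = sgm nu + j%:R.
Proof.
move=> nh Hh Rh Jh nx Hx; case: (hw_decomp nh Hh Rh Jh) => M HM.
case: (HM x) => a [y [Hxy Hy]].
set s := sgm nu.
have HxG : x^T *m G = lam *: x^T by rewrite /G -trmx_mul Hx linearZ.
have HhG : h^T *m G = s *: h^T by rewrite /G -trmx_mul (D_wv Hh) linearZ.
have Hy0 : y *m Pm s M = 0 := Pm_annih Hy.
have H0 : x^T *m Pm s M *m (G - s%:M) = 0.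
  rewrite Hxy !mulmxDl Hy0 mul0mx addr0 -!scalemxAl (Pm_eig _ _ HhG).
  by rewrite -!scalemxAl mulmxBr HhG mul_mx_scalar subrr !scaler0.
move: H0; rewrite (Pm_eig _ _ HxG) -scalemxAl mulmxBr HxG mul_mx_scalar.
rewrite -scalerBl scalerA => /eqP; rewrite scaler_eq0 trmx_eq0 (negPf nx) orbF.
rewrite mulf_eq0 => /orP [/prodf_eq0 [j _]|]; rewrite subr_eq0 => /eqP ->.
  by exists j.+1.
by exists 0%N; rewrite addr0.
Qed.

Lemma UNIQ (h x : 'cV[C]_d) nu c : h != 0 -> wv h nu -> RK h -> J *m h = c *: h ->
  Dop *m x = sgm nu *: x -> exists a, x = a *: h.
Proof.
move=> nh Hh Rh Jh Hx; case: (hw_decomp nh Hh Rh Jh) => M HM.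
case: (HM x) => a [y [Hxy Hy]].
set s := sgm nu.
have HxG : x^T *m G = s *: x^T by rewrite /G -trmx_mul Hx linearZ.
have HhG : h^T *m G = s *: h^T by rewrite /G -trmx_mul (D_wv Hh) linearZ.
have Hy0 : y *m Pm s M = 0 := Pm_annih Hy.
have H1 := Pm_eig s M HxG.
rewrite {1}Hxy mulmxDl Hy0 addr0 -scalemxAl (Pm_eig _ _ HhG) scalerA mulrC -scalerA in H1.
have nP : \prod_(j < M) (s - (s + (j.+1)%:R)) != 0.
  apply/prodf_neq0 => j _.
  by rewrite opprD addNKr oppr_eq0 pnatr_eq0.
exists a; apply: trmx_inj; rewrite linearZ /=.
exact: (scalerI nP (esym H1)).
Qed.

Lemma wvD (x y : 'cV[C]_d) nu : wv x nu -> wv y nu -> wv (x + y) nu.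
Proof. by move=> Hx Hy p; rewrite mulmxDr Hx Hy scalerDr. Qed.
Lemma wvZ (x : 'cV[C]_d) nu a : wv x nu -> wv (a *: x) nu.
Proof. by move=> Hx p; rewrite -scalemxAr Hx scalerA mulrC -scalerA. Qed.
Lemma RKD (x y : 'cV[C]_d) : RK x -> RK y -> RK (x + y).
Proof. by move=> Hx Hy p q pq; rewrite mulmxDr Hx ?Hy ?addr0. Qed.
Lemma RKZ (x : 'cV[C]_d) a : RK x -> RK (a *: x).
Proof. by move=> Hx p q pq; rewrite -scalemxAr Hx ?scaler0. Qed.

Lemma JJ (x : 'cV[C]_d) : J *m (J *m x) = x.
Proof. by case: Hrep => HJ _ _; rewrite mulmxA HJ mul1mx. Qed.

Lemma homog (x : 'cV[C]_d) nu : x != 0 -> wv x nu -> RK x ->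
  exists (h : 'cV[C]_d) (c : C), [/\ h != 0, wv h nu, RK h & J *m h = c *: h].
Proof.
move=> nx Hx Rx.
have HJx : wv (J *m x) nu.
  by move=> p; rewrite Jcomm addbb /= scale1r Hx -scalemxAr.
have RJx : RK (J *m x).
  by move=> p q pq; rewrite Jcomm Rx // mulmx0 scaler0.
case: (eqVneq (x + J *m x) 0) => [H0|nz].
  exists (x - J *m x), (-1); split.
  - have -> : J *m x = - x by apply/eqP; rewrite -addr_eq0 addrC H0.
    by rewrite opprK -mulr2n -scaler_nat scaler_eq0 pnatr_eq0 (negPf nx).
  - by move=> p; rewrite mulmxBr Hx HJx scalerBr.
  - by move=> p q pq; rewrite mulmxBr Rx ?RJx ?subr0.
  - by rewrite mulmxBr JJ scaleN1r opprB.
exists (x + J *m x), 1; split => //.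
- by move=> p; rewrite mulmxDr Hx HJx scalerDr.
- by move=> p q pq; rewrite mulmxDr Rx ?RJx ?addr0.
- by rewrite mulmxDr JJ scale1r addrC.
Qed.

Lemma HWU (h0 x : 'cV[C]_d) Lt c0 nu : h0 != 0 -> wv h0 Lt -> RK h0 ->
  J *m h0 = c0 *: h0 -> x != 0 -> wv x nu -> RK x ->
  exists a, [/\ a != 0, x = a *: h0 & forall p, nu p = Lt p].
Proof.
move=> nh0 Hh0 Rh0 Jh0 nx Hx Rx.
case: (homog nx Hx Rx) => h' [c' [nh' Hh' Rh' Jh']].
case: (EIG nh0 Hh0 Rh0 Jh0 nx (D_wv Hx)) => j1 Hj1.
case: (EIG nh' Hh' Rh' Jh' nh0 (D_wv Hh0)) => j2 Hj2.
have Hs : sgm nu = sgm Lt.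
  move: Hj1; rewrite Hj2 -addrA -natrD => /eqP.
  rewrite -subr_eq0 opprD addrA subrr add0r oppr_eq0 pnatr_eq0 addn_eq0 => /andP [/eqP -> _].
  by rewrite addr0.
case: (UNIQ nh0 Hh0 Rh0 Jh0 (_ : Dop *m x = sgm Lt *: x)) => [|a Ha].
  by rewrite -Hs (D_wv Hx).
have na : a != 0 by apply: contraNneq nx => a0; rewrite Ha a0 scale0r.
exists a; split => // p.
have := Hx p; rewrite Ha -scalemxAr Hh0 !scalerA => /eqP.
rewrite -subr_eq0 -scalerBl scaler_eq0 (negPf nh0) orbF.
by rewrite [nu p * a]mulrC -mulrBr mulf_eq0 (negPf na) /= subr_eq0 => /eqP ->.
Qed.

Lemma neq_tl (a : 'I_N) : (a < T)%N -> a != tl.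
Proof. by move=> aT; rewrite -val_eqE /= neq_ltn aT. Qed.

Lemma le_T (a : 'I_N) : (a <= T)%N.
Proof. by rewrite -ltnS ltn_ord. Qed.

Lemma c_ee (a b : 'I_N) (z : 'cV[C]_d) : a != tl -> b != tl ->
  E a tl *m (E b tl *m z) = sgn m a tl b tl *: (E b tl *m (E a tl *m z)).
Proof.
move=> atl btl; rewrite rel eq_sym (negPf btl) (negPf atl) mulr0 !scale0r.
by rewrite addr0 subr0.
Qed.

Lemma c_ee0 (a : 'I_N) (z : 'cV[C]_d) : a != tl -> ~~ par m a ->
  E a tl *m (E a tl *m z) = 0.
Proof.
move=> atl pa; have := c_ee z atl atl; rewrite /sgn par_tl (negPf pa) /= expr1.
move/eqP; rewrite scaleN1r -subr_eq0 opprK -mulr2n -scaler_nat scaler_eq0.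
by rewrite pnatr_eq0 /= => /eqP.
Qed.

Lemma c_Ee (a b r : 'I_N) (z : 'cV[C]_d) : a != tl ->
  E a b *m (E r tl *m z) = sgn m a b r tl *: (E r tl *m (E a b *m z))
    + (b == r)%:R *: (E a tl *m z).
Proof. by move=> atl; rewrite rel (negPf atl) mulr0 scale0r subr0. Qed.

Lemma c_fe (q r : 'I_N) (z : 'cV[C]_d) :
  E tl q *m (E r tl *m z) = sgn m tl q r tl *: (E r tl *m (E tl q *m z))
    + ((q == r)%:R *: (E tl tl *m z) - sgn m tl q r tl *: (E r q *m z)).
Proof. by rewrite rel eqxx mulr1 addrA. Qed.

Lemma c_Ef (a b q : 'I_N) (z : 'cV[C]_d) : b != tl ->
  E a b *m (E tl q *m z) = sgn m a b tl q *: (E tl q *m (E a b *m z))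
    + (- (sgn m a b tl q * (a == q)%:R) *: (E tl b *m z)).
Proof. by move=> btl; rewrite rel (negPf btl) scale0r addr0 scaleNr. Qed.

Lemma c_ff (q r : 'I_N) (z : 'cV[C]_d) : q != tl -> r != tl ->
  E tl q *m (E tl r *m z) = sgn m tl q tl r *: (E tl r *m (E tl q *m z)).
Proof.
move=> qtl rtl; rewrite rel (negPf qtl) eq_sym (negPf rtl) mulr0 !scale0r.
by rewrite addr0 subr0.
Qed.

Lemma c_Te (r : 'I_N) (z : 'cV[C]_d) : r != tl ->
  E tl tl *m (E r tl *m z) = E r tl *m (E tl tl *m z) + (-1) *: (E r tl *m z).
Proof.
move=> rtl; rewrite rel sgn1l // scale1r eq_sym (negPf rtl) scale0r addr0 eqxx mul1r.
by rewrite ?scale1r scaleN1r.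
Qed.

Lemma c_Tf (q : 'I_N) (z : 'cV[C]_d) : q != tl ->
  E tl tl *m (E tl q *m z) = E tl q *m (E tl tl *m z) + 1 *: (E tl q *m z).
Proof.
move=> qtl; rewrite rel sgn1l // scale1r eqxx scale1r eq_sym (negPf qtl) mulr0 scale0r.
by rewrite subr0.
Qed.

Lemma c_ef (q : 'I_N) (z : 'cV[C]_d) : par m q ->
  E tl q *m (E q tl *m z) = E q tl *m (E tl q *m z) - E q q *m z + E tl tl *m z.
Proof.
move=> pq; have := rel q tl tl q z; rewrite sgn1l ?par_tl // scale1r eqxx mul1r !scale1r.
move=> ->; rewrite eqxx scale1r; set Y := E tl q *m _; set B := E q q *m z.
by rewrite (addrAC (Y + B)) addrK subrK.
Qed.

Lemma sl2 (q : 'I_N) (x : 'cV[C]_d) nu : par m q -> q != tl ->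
  E tl q *m x = 0 -> wv x nu -> forall j,
  E tl q *m iter j.+1 (app (E q tl)) x =
   - ((j.+1)%:R * (nu q - nu tl + j%:R)) *: iter j (app (E q tl)) x.
Proof.
move=> pq qtl fx Hx; have Hw := wv_iter _ Hx qtl.
elim => [|j IH].
  rewrite /= /app c_ef // fx mulmx0 sub0r Hx Hx -scaleNr -scalerDl.
  congr (_ *: _); ring.
rewrite [iter j.+2 _ _]/= {1}/app c_ef // IH -scalemxAr.
rewrite (Hw j.+1 q) (Hw j.+1 tl) eqxx (negPf qtl) eq_sym (negPf qtl).
change (E q tl *m iter j (app (E q tl)) x) with (iter j.+1 (app (E q tl)) x); rewrite eqxx /=.
rewrite -scalerBl -scalerDl; congr (_ *: _).
rewrite !mulrSr; ring.
Qed.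

Lemma iter_lin (A : 'M[C]_d) k (a b : C) (u v : 'cV[C]_d) :
  iter k (app A) (a *: u + b *: v) = a *: iter k (app A) u + b *: iter k (app A) v.
Proof. by elim: k => //= k ->; rewrite /app mulmxDr -!scalemxAr. Qed.

Definition ea (r : nat) : 'M[C]_d := E (inord r) tl.

Fixpoint ech (ks : nat -> nat) (fuel r : nat) (u : 'cV[C]_d) : 'cV[C]_d :=
  if fuel is f.+1 then ech ks f r.+1 (iter (ks r) (app (ea r)) u) else u.

Lemma ech_ext ks ks' fuel : forall r u, (forall b, (r <= b < r + fuel)%N -> ks b = ks' b) ->
  ech ks fuel r u = ech ks' fuel r u.
Proof.
elim: fuel => //= fuel IH r u Hk.
rewrite Hk ?leqnn ?addnS ?ltnS ?leq_addr //; apply: IH => b /andP [h1 h2].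
by apply: Hk; rewrite (ltnW h1) /= -addSnnS.
Qed.

Lemma ech_lin ks fuel : forall r (a b : C) (u v : 'cV[C]_d),
  ech ks fuel r (a *: u + b *: v) = a *: ech ks fuel r u + b *: ech ks fuel r v.
Proof. by elim: fuel => //= fuel IH r a b u v; rewrite iter_lin IH. Qed.

Section Chain.
Variables (h0 : 'cV[C]_d) (Lt : 'I_N -> C) (c0 : C).
Hypotheses (nh0 : h0 != 0) (Hh0 : wv h0 Lt) (Rh0 : RK h0) (Jh0 : J *m h0 = c0 *: h0).

Lemma ord_eq (a b : 'I_N) : (a : nat) = b -> a = b.
Proof. exact: val_inj. Qed.

Lemma CH fuel : forall r (u : 'cV[C]_d) nu, (fuel + r)%N = T -> u != 0 -> wv u nu ->
  L_maximal T rho u ->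
  (forall a : 'I_N, (a < r)%N -> E a tl *m u = 0) ->
  exists ks : nat -> nat,
  [/\ exists2 c, c != 0 & ech ks fuel r u = c *: h0,
      forall a : 'I_N, (a < r)%N -> nu a = Lt a,
      forall a : 'I_N, (r <= a < T)%N ->
         (ks a)%:R = Lt a - nu a /\ ((a < m)%N -> (ks a <= 1)%N),
      nu tl = Lt tl + (\sum_(r <= b < T) ks b)%:R
    & (forall q : 'I_N, (r <= q < T)%N -> E tl q *m u = 0) ->
      forall a : 'I_N, (r <= a < T)%N -> (m <= a)%N ->
      nu tl = Lt a + (\sum_(r <= b < a) ks b)%:R].
Proof.
elim: fuel => [|fuel IH] r u nu.
  rewrite add0n => rT nu0 Hu Lu Ku.
  have Ru : RK u.
    move=> p q pq; case: (ltnP q T) => qT; first exact: Lu.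
    have -> : q = tl by apply: ord_eq; apply/eqP; rewrite eqn_leq le_T qT.
    by apply: Ku; rewrite rT; apply: leq_trans pq (le_T q).
  case: (HWU nh0 Hh0 Rh0 Jh0 nu0 Hu Ru) => a [na Ha Hnu].
  exists (fun _ => 0%N); split.
  - by exists a.
  - by move=> b _; apply: Hnu.
  - by move=> b; rewrite -rT => /andP [h1 h2]; exfalso; lia.
  - by rewrite -rT big_geq // addr0 Hnu.
  - by move=> _ b; rewrite -rT => /andP [h1 h2]; exfalso; lia.
move=> Hfr nu0 Hu Lu Ku.
have rT : (r < T)%N by lia.
set ar : 'I_N := inord r.
have ar_val : (ar : nat) = r by rewrite inordK //; lia.
have artl : ar != tl by apply: neq_tl; rewrite ar_val.
have ndel : (-1 : C) != 0 by rewrite oppr_eq0 oner_eq0.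
case: (nil_shift ndel (c_Te (r := ar)^~ artl) (Hu tl) nu0) => k [nk zk].
set u' := iter k (app (E ar tl)) u.
set nu' := fun i : 'I_N => nu i + k%:R * ((i == ar)%:R - (i == tl)%:R).
have Hu' : wv u' nu' := wv_iter k Hu artl.
have Lu' : L_maximal T rho u'.
  move=> p q pq qT.
  apply: (iter_kill2 (c := sgn m p q ar tl) (Cf := fun z => (q == ar)%:R *: (E p tl *m z))).
  - by move=> z; apply: c_Ee; apply: neq_tl; lia.
  - exact: Lu.
  - move=> j; case: (eqVneq q ar) => [eqa|_]; last by rewrite scale0r.
    rewrite scale1r; apply: (iter_kill (c := sgn m p tl ar tl)).
    + by move=> z; apply: c_ee => //; apply: neq_tl; lia.
    + by apply: Ku; rewrite -ar_val -eqa.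
have Ku' : forall a : 'I_N, (a < r.+1)%N -> E a tl *m u' = 0.
  move=> a; rewrite ltnS leq_eqVlt => /orP [/eqP ear'|ar'].
    have -> : a = ar by apply: ord_eq; rewrite ar_val.
    exact: zk.
  apply: (iter_kill (c := sgn m a tl ar tl)).
  - by move=> z; apply: c_ee => //; apply: neq_tl; lia.
  - exact: Ku.
have Hfr' : (fuel + r.+1)%N = T by lia.
case: (IH r.+1 u' nu' Hfr' nk Hu' Lu' Ku') => ks' [[c nc Hc] H2 H3 H5 H6].
have nu'ar : nu' ar = nu ar + k%:R.
  by rewrite /nu' eqxx (negPf artl) /= subr0 mulr1.
have nu'tl : nu' tl = nu tl - k%:R.
  by rewrite /nu' eqxx eq_sym (negPf artl) /= sub0r mulrN1.
have nu'o : forall a : 'I_N, (a : nat) != r -> (a < T)%N -> nu' a = nu a.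
  move=> a nar aT; rewrite /nu' (negPf (neq_tl aT)).
  have -> : (a == ar) = false by apply/negP => /eqP ea'; move: nar; rewrite ea' ar_val eqxx.
  by rewrite /= subr0 mulr0 addr0.
have Hk : k%:R = Lt ar - nu ar.
  by rewrite -(H2 ar) ?ar_val // nu'ar addrC addKr.
set ks := fun b => if b == r then k else ks' b.
have Hsum : forall a, (r < a)%N -> (\sum_(r <= b < a) ks b = k + \sum_(r.+1 <= b < a) ks' b)%N.
  move=> a ra; rewrite big_ltn // /ks eqxx; congr (_ + _)%N.
  by apply: eq_big_nat => b /andP [h1 _]; rewrite (negPf (_ : b != r)) //; lia.
exists ks; split.
- exists c => //=; rewrite /ks eqxx -/u' -Hc; apply: ech_ext => b /andP [h1 _].
  by rewrite /ks (negPf (_ : b != r)) //; lia.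
- move=> a ar'; rewrite -(H2 a (ltnW ar')) nu'o //; lia.
- move=> a /andP [ra aT]; case: (eqVneq (a : nat) r) => [ear'|near].
    have -> : a = ar by apply: ord_eq; rewrite ar_val.
    rewrite /ks ar_val eqxx -Hk; split => // am.
    case: k nk zk Hk {Hsum ks u' Hu' Lu' Ku' nu' nu'ar nu'tl nu'o H2 H3 H5 H6 Hc} => [|[|k]] //.
    move=> nk _ _; exfalso; move/negP: nk; apply.
    rewrite /= /app c_ee0 // /par ar_val -ltnNge; lia.
  have ra1 : (r.+1 <= a < T)%N by rewrite aT andbT ltn_neqAle eq_sym near ra.
  rewrite /ks (negPf near); have [H3a H3b] := H3 a ra1.
  by split => //; rewrite H3a nu'o.
- rewrite Hsum // natrD addrA -(addrC k%:R) -addrA -H5 nu'tl; ring.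
- move=> Fk.
  have Fk' : forall q : 'I_N, (r.+1 <= q < T)%N -> E tl q *m u' = 0.
    move=> q /andP [rq qT].
    have nqa : q != ar by apply/negP => /eqP eqa; move: rq; rewrite eqa ar_val ltnn.
    apply: (iter_kill2 (c := sgn m tl q ar tl)
       (Cf := fun z => (q == ar)%:R *: (E tl tl *m z) - sgn m tl q ar tl *: (E ar q *m z))).
    + by move=> z; apply: c_fe.
    + by apply: Fk; rewrite qT andbT ltnW.
    + move=> j; rewrite (negPf nqa) scale0r sub0r.
      rewrite (iter_kill (c := sgn m ar q ar tl)) ?scaler0 ?oppr0 //.
      * by move=> z; rewrite c_Ee // (negPf nqa) scale0r addr0.
      * by apply: Lu => //; rewrite ar_val.
  move=> a /andP [ra aT] ma; case: (eqVneq (a : nat) r) => [ear'|near].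
    have -> : a = ar by apply: ord_eq; rewrite ar_val.
    rewrite big_geq ?ar_val // addr0.
    have pa : par m ar by rewrite /par ar_val -ear'.
    have fu : E tl ar *m u = 0 by apply: Fk; rewrite ar_val leqnn.
    have := sl2 pa artl fu Hu k; rewrite zk mulmx0 => /eqP.
    rewrite eq_sym scaler_eq0 (negPf nk) orbF oppr_eq0 mulf_eq0 pnatr_eq0 /=.
    rewrite addrAC subr_eq0 => /eqP <-; rewrite Hk; ring.
  have ra' : (r < a)%N by rewrite ltn_neqAle eq_sym near ra.
  rewrite Hsum // natrD addrA -(addrC k%:R) -addrA -H6 //; last by rewrite ra' aT.
  rewrite nu'tl; ring.
Qed.

Lemma FCH r : forall (u : 'cV[C]_d) nu, (r <= T)%N -> u != 0 -> wv u nu ->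
  L_maximal T rho u -> (forall b : 'I_N, (r <= b < T)%N -> E tl b *m u = 0) ->
  exists (s : 'cV[C]_d) nus, [/\ s != 0, wv s nus, L_maximal T rho s,
    (forall b : 'I_N, (b < T)%N -> E tl b *m s = 0) &
    forall a : 'I_N, (a < T)%N -> exists j : nat, nu a = nus a + j%:R].
Proof.
elim: r => [|r IH] u nu rT nu0 Hu Lu Ku.
  exists u, nu; split => // a aT; by exists 0%N; rewrite addr0.
set br : 'I_N := inord r.
have br_val : (br : nat) = r by rewrite inordK //; lia.
have brtl : br != tl by apply: neq_tl; rewrite br_val.
have ndel : (1 : C) != 0 by rewrite oner_eq0.
case: (nil_shift ndel (c_Tf (q := br)^~ brtl) (Hu tl) nu0) => k [nk zk].
set u' := iter k (app (E tl br)) u.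
have tlbr : tl != br by rewrite eq_sym.
have Hu' := wv_iter k Hu tlbr.
have Lu' : L_maximal T rho u'.
  move=> p q pq qT.
  apply: (iter_kill2 (c := sgn m p q tl br)
    (Cf := fun z => - (sgn m p q tl br * (p == br)%:R) *: (E tl q *m z))).
  - by move=> z; apply: c_Ef; apply: neq_tl.
  - exact: Lu.
  - move=> j; case: (eqVneq p br) => [epb|_]; last by rewrite mulr0 oppr0 scale0r.
    rewrite (iter_kill (c := sgn m tl q tl br)) ?scaler0 //.
    + by move=> z; apply: c_ff => //; apply: neq_tl.
    + by apply: Ku; rewrite qT andbT -br_val -epb.
have Ku' : forall b : 'I_N, (r <= b < T)%N -> E tl b *m u' = 0.
  move=> b /andP [rb bT]; case: (eqVneq (b : nat) r) => [ebr|nbr].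
    have -> : b = br by apply: ord_eq; rewrite br_val.
    exact: zk.
  apply: (iter_kill (c := sgn m tl b tl br)).
  - by move=> z; apply: c_ff => //; apply: neq_tl.
  - by apply: Ku; rewrite bT andbT ltn_neqAle eq_sym nbr rb.
case: (IH u' _ (ltnW rT) nk Hu' Lu' Ku') => s [nus [ns Hs Ls Ks Hj]].
exists s, nus; split => // a aT; case: (Hj a aT) => j.
rewrite (negPf (neq_tl aT)) /= sub0r.
case: (eqVneq a br) => [->|_] Hj'; last by exists j; rewrite -Hj' oppr0 mulr0 addr0.
by exists (j + k)%N; rewrite natrD addrA -Hj' /=; ring.
Qed.
End Chain.
End Thm.

Theorem theorem2 (m n d : nat)
    (rho : 'I_(m + n).+1 -> 'I_(m + n).+1 -> 'M[C]_d) (J : 'M[C]_d)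
    (Lt : 'I_(m + n).+1 -> C)
    (v : 'cV[C]_d) (w : 'I_(m + n).+1 -> C) (Lam : 'I_(m + n) -> C) :
  super_glrep m rho J ->
  irreducible_super rho J ->
  has_highest_weight rho Lt ->
  weight_vector rho v w ->
  L_maximal (m + n) rho v ->
  (forall p : 'I_(m + n), w (widen_ord (leqnSn _) p) = Lam p) ->
  ((forall p : 'I_(m + n), (m <= p)%N ->
      Lam p <= Lt (widen_ord (leqnSn _) p) /\ Lt (lift ord0 p) <= Lam p) /\
   (forall p : 'I_(m + n), (p < m)%N ->
      Lam p <= Lt (widen_ord (leqnSn _) p) /\
      Lt (widen_ord (leqnSn _) p) - 1 <= Lam p)) /\
  (forall (v' : 'cV[C]_d) (w' : 'I_(m + n).+1 -> C),
      weight_vector rho v' w' ->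
      L_maximal (m + n) rho v' ->
      (forall p : 'I_(m + n), w' (widen_ord (leqnSn _) p) = Lam p) ->
      exists c : C, v' = c *: v).
Proof.
move=> Hrep Hirr [vH [[nvH HvH] RvH]] [nv Hv] Lv Hw.
case: (homog Hrep nvH HvH RvH) => h0 [c0 [nh0 Hh0 Rh0 Jh0]].
have HfT : (m + n + 0)%N = (m + n)%N by rewrite addn0.
have K0 : forall (u : 'cV[C]_d) (a : 'I_(m + n).+1), (a < 0)%N -> rho a (@tl m n) *m u = 0 by [].
case: (CH Hrep Hirr nh0 Hh0 Rh0 Jh0 HfT nv Hv Lv (K0 v)) => ks [[c nc Hc] _ H3 H5 _].
have Hup : forall p : 'I_(m + n), Lam p <= Lt (widen_ord (leqnSn _) p) /\
     ((p < m)%N -> Lt (widen_ord (leqnSn _) p) - 1 <= Lam p).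
  move=> p; set a := widen_ord _ p.
  have [Ha Hb] := H3 a (ltn_ord p).
  rewrite -Hw -/a; split; first by rewrite -subr_ge0 -Ha ler0n.
  move=> pm; have := Hb pm; rewrite -(ler_nat C) => Hk.
  by rewrite lerBlDr addrC -lerBlDr -Ha.
have Kv : forall b : 'I_(m + n).+1, (m + n <= b < m + n)%N -> rho (@tl m n) b *m v = 0.
  by move=> b /andP [h1 h2]; exfalso; lia.
case: (FCH Hrep nh0 (leqnn _) nv Hv Lv Kv) => s [nus [ns Hs Ls Ks Hj]].
case: (CH Hrep Hirr nh0 Hh0 Rh0 Jh0 HfT ns Hs Ls (K0 s)) => ks2 [_ _ H3s H5s H6s].
have H6' := H6s (fun q Hq => Ks q (proj2 (andP Hq))).
have Hlow : forall p : 'I_(m + n), (m <= p)%N -> Lt (lift ord0 p) <= Lam p.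
  move=> p mp; set a := widen_ord (leqnSn _) p; set a1 := lift ord0 p.
  have a1v : (a1 : nat) = p.+1 by [].
  have Q1 : nus (@tl m n) = Lt a1 + (\sum_(0 <= b < p.+1) ks2 b)%:R.
    case: (ltnP p.+1 (m + n)) => h.
      by rewrite -a1v; apply: H6'; rewrite a1v ?h //; lia.
    have pT : p.+1 = (m + n)%N by have := ltn_ord p; lia.
    have -> : a1 = @tl m n by apply: ord_eq; rewrite a1v pT.
    by rewrite pT.
  have Q0 : nus (@tl m n) = Lt a + (\sum_(0 <= b < p) ks2 b)%:R.
    by apply: H6' => //=; exact: ltn_ord p.
  have [Ha _] := H3s a (ltn_ord p).
  rewrite big_nat_recr //= natrD addrA Q0 in Q1.
  have E1 : Lt a = Lt a1 + (ks2 p)%:R.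
    by apply: (addIr (\sum_(0 <= b < p) ks2 b)%:R); rewrite Q1; ring.
  have Hn : nus a = Lt a1.
    have -> : nus a = Lt a - (ks2 p)%:R by rewrite Ha; ring.
    by rewrite E1; ring.
  case: (Hj a (ltn_ord p)) => j; rewrite Hw -/a Hn => ->.
  by rewrite -subr_ge0 addrC addKr ler0n.
split.
  by split => p Hp; have [U1 U2] := Hup p; split => //; [exact: Hlow | exact: U2].
move=> v' w' [nv' Hv'] Lv' Hw'.
case: (CH Hrep Hirr nh0 Hh0 Rh0 Jh0 HfT nv' Hv' Lv' (K0 v')) => ks' [[c' nc' Hc'] _ H3' H5' _].
have Hww0 : forall i : 'I_(m + n).+1, (i < m + n)%N -> w i = w' i.
  move=> i iT; have -> : i = widen_ord (leqnSn _) (Ordinal iT) by apply: ord_eq.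
  by rewrite Hw Hw'.
have Hks : forall b, (0 <= b < 0 + (m + n))%N -> ks b = ks' b.
  move=> b /andP [_]; rewrite add0n => bT.
  have ab : ((inord b : 'I_(m + n).+1) : nat) = b by rewrite inordK //; lia.
  have hb : (0 <= (inord b : 'I_(m + n).+1) < m + n)%N by rewrite ab.
  have [Ha _] := H3 _ hb; have [Ha' _] := H3' _ hb.
  rewrite ab in Ha Ha'; apply/eqP; rewrite -(eqr_nat C) Ha Ha' Hww0 // ab //.
have Hc2 : ech rho ks (m + n) 0 v' = c' *: h0 by rewrite (ech_ext _ _ Hks).
have Hww : forall i, w i = w' i.
  move=> i; case: (ltnP i (m + n)) => iT; first exact: Hww0.
  have -> : i = @tl m n by apply: ord_eq; rewrite /tl /=; have := ltn_ord i; lia.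
  rewrite H5 H5'; congr (_ + _%:R); apply: eq_big_nat => b Hb; apply: Hks.
  by rewrite add0n.
set u := c' *: v + (- c) *: v'.
have Hu : wv rho u w.
  move=> p; rewrite mulmxDr -!scalemxAr Hv Hv' -Hww !scalerA.
  by rewrite [c' * _]mulrC [(- c) * _]mulrC -!scalerA scalerDr.
have Lu : L_maximal (m + n) rho u.
  by move=> p q pq qT; rewrite mulmxDr -!scalemxAr Lv ?Lv' // !scaler0 addr0.
have u0 : u = 0.
  apply/eqP; apply/negPn/negP => nu.
  case: (CH Hrep Hirr nh0 Hh0 Rh0 Jh0 HfT nu Hu Lu (K0 u)) => ks'' [[c'' nc'' Hc''] _ H3'' _ _].
  have Hks2 : forall b, (0 <= b < 0 + (m + n))%N -> ks b = ks'' b.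
    move=> b /andP [_]; rewrite add0n => bT.
    have ab : ((inord b : 'I_(m + n).+1) : nat) = b by rewrite inordK //; lia.
    have hb : (0 <= (inord b : 'I_(m + n).+1) < m + n)%N by rewrite ab.
    have [Ha _] := H3 _ hb; have [Ha' _] := H3'' _ hb.
    rewrite ab in Ha Ha'; apply/eqP; rewrite -(eqr_nat C) Ha Ha' //.
  have : ech rho ks (m + n) 0 u = 0.
    rewrite /u ech_lin Hc Hc2 !scalerA -scalerDl.
    by rewrite mulNr [c * c']mulrC subrr scale0r.
  rewrite (ech_ext _ _ Hks2) Hc'' => /eqP; rewrite scaler_eq0 (negPf nc'') (negPf nh0).
  by [].
exists (c' / c).
move: u0; rewrite /u scaleNr => /eqP; rewrite subr_eq0 => /eqP Hcv.
by rewrite mulrC -scalerA Hcv scalerA mulVf // scale1r.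
Qed.
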